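(* Every set strongly star Hurewicz space $X$ that is hereditarily metacompact (every subspace of $X$ is metacompact) is a Hurewicz space.
   Context: For a subset $A$ of a space $X$ and a collection $\mathcal{U}$ of subsets of $X$, ${\rm St}(A,\mathcal{U}) = \bigcup\{U \in \mathcal{U}: U \cap A \neq \emptyset\}$. A space is metacompact if every open cover has a point-finite open refinement. A space $X$ is Hurewicz if for each sequence $(\mathcal{U}_n: n \in \mathbb{N})$ of open covers of $X$ there are finite $\mathcal{V}_n \subset \mathcal{U}_n$ such that each $x \in X$ lies in $\bigcup\mathcal{V}_n$ for all but finitely many $n$. $X$ is set strongly star Hurewicz if for each nonempty $A \subset X$ and each sequence $(\mathcal{U}_n: n\in\mathbb{N})$ of collections of sets open in $X$ with $\overline{A} \subset \bigcup\mathcal{U}_n$ for all $n$, there are finite sets $F_n \subset \overline{A}$ such that each $x \in A$ lies in ${\rm St}(F_n,\mathcal{U}_n)$ for all but finitely many $n$. *)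

(* Defs.v *)
From HB Require Import structures.
From mathcomp Require Import all_boot all_order.
From mathcomp Require Import all_classical all_reals topology.
Set Implicit Arguments. Unset Strict Implicit. Unset Printing Implicit Defensive.
Local Open Scope classical_set_scope.

Section Defs.
Context {X : topologicalType}.

Definition relopen (Y W : set X) : Prop := exists2 U : set X, open U & W = U `&` Y.

Definition metacompact_in (Y : set X) : Prop :=
  forall C : set (set X),
    (forall W, C W -> relopen Y W) -> Y `<=` \bigcup_(W in C) W ->
    exists D : set (set X),
      [/\ (forall V, D V -> relopen Y V),
          Y `<=` \bigcup_(V in D) V,
          (forall V, D V -> exists2 W, C W & V `<=` W) &
          (forall y, Y y -> finite_set [set V | D V /\ V y])].

Definition hereditarily_metacompact : Prop := forall Y : set X, metacompact_in Y.

Definition St (A : set X) (U : set (set X)) : set X :=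
  \bigcup_(W in [set W | U W /\ W `&` A !=set0]) W.

Definition open_cover (U : set (set X)) : Prop :=
  (forall W, U W -> open W) /\ setT `<=` \bigcup_(W in U) W.

Definition hurewicz : Prop :=
  forall U : nat -> set (set X), (forall n, open_cover (U n)) ->
  exists V : nat -> set (set X),
    (forall n, finite_set (V n) /\ V n `<=` U n) /\
    (forall x : X, exists N, forall n, (N <= n)%N -> (\bigcup_(W in V n) W) x).

Definition set_strongly_star_hurewicz : Prop :=
  forall (A : set X) (U : nat -> set (set X)),
    A !=set0 ->
    (forall n, (forall W, U n W -> open W) /\ closure A `<=` \bigcup_(W in U n) W) ->
    exists F : nat -> set X,
      (forall n, finite_set (F n) /\ F n `<=` closure A) /\
      (forall x, A x -> exists N, forall n, (N <= n)%N -> St (F n) (U n) x).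

End Defs.

(* Main.v *)
Require Import Defs.
From mathcomp Require Import all_boot all_order.
From mathcomp Require Import all_classical all_reals topology.
Local Open Scope classical_set_scope.

Theorem mainTheorem3 (X : topologicalType) :
  @set_strongly_star_hurewicz X -> @hereditarily_metacompact X -> @hurewicz X.
Proof.
move=> ssh hm U Uc.
have [[x0 _]|X0] := pselect (exists x : X, True); last first.
  exists (fun=> set0); split; first by move=> n; split; [exact: finite_set0|].
  by move=> x; exfalso; apply: X0; exists x.
have hD : forall n, exists D : set (set X),
      [/\ (forall V, D V -> relopen setT V),
          setT `<=` \bigcup_(V in D) V,
          (forall V, D V -> exists2 W, U n W & V `<=` W) &
          (forall y, setT y -> finite_set [set V | D V /\ V y])].
  move=> n; apply: hm; last by case: (Uc n).
  move=> W UW; exists W; [by case: (Uc n) => + _; apply|by rewrite setIT].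
have [D HD] := choice hD.
have Dop : forall n V, D n V -> open V.
  move=> n V DV; have [h1 _ _ _] := HD n.
  by have [W oW ->] := h1 V DV; rewrite setIT.
have [F [HF1 HF2]] : exists F : nat -> set X,
      (forall n, finite_set (F n) /\ F n `<=` closure setT) /\
      (forall x, setT x -> exists N, forall n, (N <= n)%N -> St (F n) (D n) x).
  apply: ssh; first by exists x0.
  move=> n; split; first exact: Dop.
  by rewrite closureT; case: (HD n).
have hg : forall p : nat * set X, exists W : set X,
    D p.1 p.2 -> U p.1 W /\ p.2 `<=` W.
  move=> [n V]; have [DV|nDV] := pselect (D n V).
    have [_ _ h3 _] := HD n.
    by have [W UW VW] := h3 V DV; exists W.
  by exists set0.
have [g Hg] := choice hg.
pose S n := \bigcup_(y in F n) [set V | D n V /\ V y].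
exists (fun n => (fun V => g (n, V)) @` S n); split.
  move=> n; split.
    apply: finite_image; apply: bigcup_finite; first by case: (HF1 n).
    have [_ _ _ h4] := HD n.
    by move=> y _; apply: h4.
  by move=> W [V [y _ [DV _]] <-]; have [] := Hg (n, V) DV.
move=> x; have [N HN] := HF2 x I; exists N => n /HN [V [DV [y [Vy Fy]]] Vx].
exists (g (n, V)); first by exists V => //; exists y.
by have [_] := Hg (n, V) DV; apply.
Qed.
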